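(* Let $\Omega$, $B$, $B^+$, $Z$, $B_Z$, $\mathcal{P}_Z$ and $G$ be as in the context, and let $\alpha:\mathcal{P}_Z\to\mathbb{R}_+\cup\{+\infty\}$ satisfy (A1) $\inf_{\mathbb{P}\in\mathcal{P}_Z}\alpha(\mathbb{P})=0$, and (A2) $\alpha(\mathbb{P})\ge\mathbb{E}^{\mathbb{P}}\beta(Z)$ for all $\mathbb{P}\in\mathcal{P}_Z$, where $\beta:[1,\infty)\to\mathbb{R}$ is an increasing function (i.e. $\beta(x)\ge\beta(y)$ for $x\ge y$) with $\lim_{x\to\infty}\beta(x)/x=+\infty$. Let $A=\{X\in B_Z:\mathbb{E}^{\mathbb{P}}X+\alpha(\mathbb{P})\ge0\text{ for all }\mathbb{P}\in\mathcal{P}_Z\}+B^+$. Then for every $n\in\mathbb{N}$ there exists $z\in\mathbb{R}_+$ such that $n(Z-z)^+-\frac1n\in G-A$.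
   Context: Fix integers $J\ge0$, $T\ge1$. $\Omega$ is a non-empty subset of $((0,\infty)\times\mathbb{R}^J)^T$, endowed with the Euclidean metric. $B$ is the space of all Borel measurable functions $X:\Omega\to\mathbb{R}$ and $B^+=\{X\in B:X\ge0\}$. $Z:\Omega\to[1,\infty)$ is a continuous function such that $\{\omega\in\Omega:Z(\omega)\le z\}$ is compact for every $z\in\mathbb{R}_+$. $B_Z$ is the set of $X\in B$ with $X/Z$ bounded, and $\mathcal{P}_Z$ the set of Borel probability measures $\mathbb{P}$ on $\Omega$ with $\mathbb{E}^{\mathbb{P}}Z<\infty$. $G\subseteq B$ is a set with $0\in G$. $G-A=\{g-a:g\in G,a\in A\}$; sums of sets are Minkowski sums. The convention $x+(+\infty)=+\infty$ is used. *)

(* Defs.v *)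
From HB Require Import structures.
From mathcomp Require Import all_boot all_order all_algebra.
From mathcomp Require Import all_classical all_reals all_analysis.
Import Order.TTheory GRing.Theory Num.Theory.
Import numFieldNormedType.Exports.
Set Implicit Arguments. Unset Strict Implicit. Unset Printing Implicit Defensive.
Local Open Scope classical_set_scope.
Local Open Scope ring_scope.

(* Ambient space ((0,oo) x R^J)^T is encoded as T x (J+1) real matrices:
   row t = (S_t, Y_t^1, ..., Y_t^J); the first column must be positive. *)
Definition Amb (R : realType) (T J : nat) := 'M[R]_(T, J.+1).

(* The state space Omega as a subtype of the ambient space; the witness w0
   (non-emptiness of Omega) is used only to equip it with a default point. *)
Definition Osub (R : realType) (T J : nat) (Om : set (Amb R T J))
  (w0 : {x : Amb R T J | Om x}) : Type := {x : Amb R T J | Om x}.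

HB.instance Definition _ R T J Om w0 := gen_eqMixin (@Osub R T J Om w0).
HB.instance Definition _ R T J Om w0 := gen_choiceMixin (@Osub R T J Om w0).
HB.instance Definition _ R T J Om w0 :=
  isPointed.Build (@Osub R T J Om w0) w0.

(* Generators of the Borel sigma-algebra of Omega (subspace topology):
   traces on Omega of open subsets of the ambient space. *)
Definition borel_gen (R : realType) (T J : nat) (Om : set (Amb R T J))
  (w0 : {x : Amb R T J | Om x}) : set (set (Osub w0)) :=
  [set S | exists U : set 'M[R]_(T, J.+1), open U /\ S = [set x | U (sval x)]].

Definition Omeas (R : realType) (T J : nat) (Om : set (Amb R T J))
  (w0 : {x : Amb R T J | Om x}) := g_sigma_algebraType (@borel_gen R T J Om w0).

Definition pt (R : realType) (T J : nat) (Om : set (Amb R T J))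
  (w0 : {x : Amb R T J | Om x}) (w : Omeas w0) : Amb R T J := sval w.

Section Spaces.
Variables (R : realType) (T J : nat) (Om : set (Amb R T J))
  (w0 : {x : Amb R T J | Om x}) (Z : Amb R T J -> R).

Definition Bset : set (Omeas w0 -> R) := [set X | measurable_fun setT X].

Definition Bplus : set (Omeas w0 -> R) := [set X | Bset X /\ forall w, 0 <= X w].

Definition BZ : set (Omeas w0 -> R) :=
  [set X | Bset X /\ exists c : R, forall w : Omeas w0, `|X w / Z (pt w)| <= c].

Definition PZ : set (probability (Omeas w0) R) :=
  [set P | (\int[P]_w (Z (pt w))%:E < +oo)%E].

Definition Aset (alpha : probability (Omeas w0) R -> \bar R) : set (Omeas w0 -> R) :=
  [set f | exists X Y, (BZ X /\ forall P, PZ P ->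
                          (0 <= \int[P]_w (X w)%:E + alpha P)%E)
                        /\ Bplus Y /\ f = X \+ Y].

Definition setminus_fun (G A : set (Omeas w0 -> R)) : set (Omeas w0 -> R) :=
  [set f | exists g a, G g /\ A a /\ f = g \- a].

End Spaces.

Arguments Bset {R T J Om} w0 _.
Arguments Bplus {R T J Om} w0 _.
Arguments BZ {R T J Om} w0 Z _.
Arguments PZ {R T J Om} w0 Z _.
Arguments Aset {R T J Om} w0 Z alpha _.
Arguments setminus_fun {R T J Om} w0 G A _.

(* Main.v *)
Require Import Defs.
From HB Require Import structures.
From mathcomp Require Import all_boot all_order all_algebra.
From mathcomp Require Import all_classical all_reals all_analysis.
From mathcomp Require Import measurable_realfun ring lra.
Import Order.TTheory GRing.Theory Num.Theory.
Import numFieldNormedType.Exports.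
Local Open Scope classical_set_scope.
Local Open Scope ring_scope.

Lemma le_integral_meas d (T : measurableType d) (R : realType)
  (mu : {measure set T -> \bar R}) (f g : T -> R) :
  measurable_fun setT f -> measurable_fun setT g -> (forall x, f x <= g x) ->
  (\int[mu]_x (f x)%:E <= \int[mu]_x (g x)%:E)%E.
Proof.
move=> mf mg fg.
have mf' : measurable_fun setT (fun x => (f x)%:E) by exact/measurable_EFinP.
have mg' : measurable_fun setT (fun x => (g x)%:E) by exact/measurable_EFinP.
rewrite integralE [leRHS]integralE; apply: leeB.
- apply: (@ge0_le_integral _ _ _ mu setT measurableT).
  + by move=> x _; exact: funepos_ge0.
  + exact: measurable_funepos.
  + exact: measurable_funepos.
  + move=> x _; rewrite !funeposE /=.
    by rewrite ge_max !le_max lexx !orbT andbT lee_fin fg.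
- apply: (@ge0_le_integral _ _ _ mu setT measurableT).
  + by move=> x _; exact: funeneg_ge0.
  + exact: measurable_funeneg.
  + exact: measurable_funeneg.
  + move=> x _; rewrite !funenegE /=.
    by rewrite ge_max !le_max lexx !orbT andbT lee_fin lerN2 fg.
Qed.
Lemma meas_Zpt (R : realType) T J (Om : set (Amb R T J)) (w0 : {x : Amb R T J | Om x})
  (Z : Amb R T J -> R) :
  {within Om, continuous Z} -> measurable_fun setT (fun w : Omeas w0 => Z (pt w)).
Proof.
move=> /continuousP hc.
apply: (measurability _ (measurable_realfun.RGenOpens.measurableE R)).
move=> _ [_ [a [b ->]] <-].
have /open_subspaceP [U oU hU] := hc _ (@interval_open R (BRight a) (BLeft b) isT isT).
apply: sub_sigma_algebra; exists U; split => //.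
have Ow (w : Omeas w0) : Om (sval w) := proj2_sig w.
apply/seteqP; split => w /=.
- move=> [_ hw].
  have h : (from_subspace Om Z @^-1` `]a, b[ `&` Om) (sval w) by split => //; exact: Ow.
  by rewrite -hU in h; case: h.
- move=> hw; split => //.
  have h : (U `&` Om) (sval w) by split => //; exact: Ow.
  by rewrite hU in h; case: h.
Qed.

Theorem proposition2p2 (R : realType) (T J : nat) (hT : (0 < T)%N)
  (Om : set (Amb R T J)) (w0 : {x : Amb R T J | Om x})
  (hOm : forall x, Om x -> forall t : 'I_T, 0 < x t ord0)
  (Z : Amb R T J -> R)
  (hZ1 : forall x, Om x -> 1 <= Z x)
  (hZc : {within Om, continuous Z})
  (hZk : forall z : R, 0 <= z -> compact (Om `&` [set x | Z x <= z]))
  (G : set (Omeas w0 -> R)) (hGB : G `<=` Bset w0) (hG0 : G (fun _ => 0))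
  (alpha : probability (Omeas w0) R -> \bar R)
  (halpha : forall P, PZ w0 Z P -> (0 <= alpha P)%E)
  (A1 : ereal_inf [set alpha P | P in PZ w0 Z] = 0%E)
  (beta : R -> R)
  (hbeta_incr : forall x y, 1 <= y -> y <= x -> beta y <= beta x)
  (hbeta_lim : (fun x => beta x / x) @ +oo --> +oo)
  (A2 : forall P, PZ w0 Z P ->
          (\int[P]_w (beta (Z (pt w)))%:E <= alpha P)%E) :
  forall n : nat, (0 < n)%N ->
    exists z : R, 0 <= z /\
      setminus_fun w0 G (Aset w0 Z alpha)
        (fun w : Omeas w0 => n%:R * Num.max (Z (pt w) - z) 0 - n%:R^-1).
Proof.
move=> n n0.
have Ow (w : Omeas w0) : Om (pt w) := proj2_sig w.
have W1 (w : Omeas w0) : 1 <= Z (pt w) by exact: hZ1.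
have W0 (w : Omeas w0) : 0 < Z (pt w) by apply: lt_le_trans (W1 w).
have mW : measurable_fun setT (fun w : Omeas w0 => Z (pt w)) by exact: meas_Zpt.
have n0' : 0 < n%:R :> R by rewrite ltr0n.
have ni0 : 0 < n%:R^-1 :> R by rewrite invr_gt0.
pose c : R := Num.max 0 (- beta 1).
have c0 : 0 <= c by rewrite le_max lexx.
have cb : - c <= beta 1 by rewrite lerNl le_max lexx orbT.
pose L : R := 1 + c * n%:R.
pose K : R := n%:R * L.
have K0 : 0 <= K by rewrite mulr_ge0 ?ler0n // addr_ge0 // mulr_ge0 // ler0n.
have [M [_ HM]] : exists M : R, M \is Num.real /\ forall x, M < x -> K <= beta x / x.
  by move/cvgryPge: hbeta_lim => /(_ K) [M [hM HM]]; exists M.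
pose z : R := Num.max (M + 1) 1.
have z0 : 0 <= z by rewrite le_max ler01 orbT.
exists z; split => //.
pose q (w : Omeas w0) : R := n%:R * Num.max (Z (pt w) - z) 0.
have mq : measurable_fun setT q.
  apply: measurable_funM => //; apply: measurable_maxr => //.
  exact: measurable_funB.
have q0 w : 0 <= q w by rewrite mulr_ge0 ?ler0n // le_max lexx orbT.
have qW w : q w <= n%:R * Z (pt w).
  rewrite ler_pM2l // ge_max (ltW (W0 w)) andbT lerBlDr lerDl //.
pose X (w : Omeas w0) : R := n%:R^-1 - q w.
have mX : measurable_fun setT X by exact: measurable_funB.
exists (fun _ => 0), X; split => //; split; last first.
  by apply/funext => w; rewrite /X /q /= sub0r opprB.
exists X, (fun _ => 0); split; last first.
  split; last by apply/funext => w; rewrite /= addr0.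
  by split => //; exact: measurable_cst.
split.
  split => //; exists (n%:R^-1 + n%:R) => w.
  rewrite normrM normfV (gtr0_norm (W0 w)) ler_pdivrMr //.
  apply: le_trans (ler_normB _ _) _.
  rewrite (gtr0_norm ni0) ger0_norm // mulrDl.
  apply: lerD; first by rewrite ler_peMr // ltW.
  exact: qW.
move=> P PZP.
have intW : P.-integrable setT (fun w => (Z (pt w))%:E).
  apply/integrableP; split; first exact/measurable_EFinP.
  rewrite (eq_integral (fun w => (Z (pt w))%:E)); first exact: PZP.
  by move=> w _; rewrite gee0_abs // lee_fin ltW.
have intnW : P.-integrable setT (fun w => ((n%:R)%:E * (Z (pt w))%:E)%E).
  exact: integrableZl.
have intq : P.-integrable setT (fun w => (q w)%:E).
  apply: (le_integrable measurableT _ _ intnW); first exact/measurable_EFinP.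
  move=> w _; rewrite -EFinM !gee0_abs ?lee_fin //.
  by rewrite mulr_ge0 ?ler0n // ltW.
have intc (r : R) : P.-integrable setT (EFin \o cst r).
  exact: finite_measure_integrable_cst.
have Qfin : (\int[P]_w (q w)%:E)%E \is a fin_num by apply: integrable_fin_num.
have [Q QE] : exists Q, (\int[P]_w (q w)%:E)%E = Q%:E.
  by exists (fine (\int[P]_w (q w)%:E)%E); rewrite fineK.
have Q0 : 0 <= Q by rewrite -lee_fin -QE integral_ge0 // => w _; rewrite lee_fin.
have IX : (\int[P]_w (X w)%:E)%E = (n%:R^-1 - Q)%:E.
  rewrite (eq_integral (fun w => ((n%:R^-1)%:E - (q w)%:E)%E)); last first.
    by move=> w _; rewrite /X EFinB.
  rewrite integralB_EFin //; [|exact: intc].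
  rewrite integral_cst //; transitivity ((n%:R^-1)%:E * 1 - Q%:E)%E; last by rewrite mule1 EFinB.
  by congr (_ * _ - _)%E; [exact: probability_setT | exact: QE].
have mb : measurable_fun setT (fun w : Omeas w0 => beta (Z (pt w))).
  have mF : measurable_fun setT ((fun x => beta (Num.max x 1)) \o (fun w : Omeas w0 => Z (pt w))).
    have mF0 : measurable_fun setT (fun x : R => beta (Num.max x 1)).
      apply: nondecreasing_measurable => // x y xy.
      apply: hbeta_incr; first by rewrite le_max lexx orbT.
      by rewrite ge_max !le_max xy lexx !orbT.
    exact: (measurableT_comp mF0 mW).
  apply: (eq_measurable_fun _ _ mF) => w _; rewrite /= max_l //.
have Lbound : ((L * Q - c)%:E <= alpha P)%E.
  apply: le_trans (A2 _ PZP).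
  have -> : ((L * Q - c)%:E = \int[P]_w (L * q w - c)%:E)%E.
    rewrite (eq_integral (fun w => ((L * q w)%:E - c%:E)%E)); last first.
      by move=> w _; rewrite EFinB.
    have iLq : P.-integrable setT (EFin \o (fun w => L * q w)).
      have -> : (EFin \o (fun w => L * q w)) = (fun w => (L%:E * (q w)%:E)%E).
        by apply/funext => w; rewrite /= EFinM.
      exact: integrableZl.
    rewrite integralB_EFin //; [|exact: intc].
    rewrite (eq_integral (fun w => (L%:E * (q w)%:E)%E)); last first.
      by move=> w _; rewrite EFinM.
    rewrite integralZl // integral_cst // QE; transitivity (L%:E * Q%:E - c%:E * 1)%E; first by rewrite mule1 -EFinM -EFinB.
    by congr (_ - _ * _)%E; symmetry; exact: probability_setT.
  apply: le_integral_meas => //.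
    apply: measurable_funB => //; apply: measurable_funM => //.
  move=> w; case: (leP z (Z (pt w))) => hz.
  - have hM : M < Z (pt w).
      apply: lt_le_trans hz; apply: (@lt_le_trans _ _ (M + 1)).
        by rewrite ltrDl ltr01.
      by rewrite le_max lexx.
    have := HM _ hM; rewrite ler_pdivlMr // => hK.
    rewrite /q max_l ?subr_ge0 //.
    have -> : L * (n%:R * (Z (pt w) - z)) = K * Z (pt w) - K * z.
      by rewrite /K; ring.
    have := mulr_ge0 K0 z0; lra.
  - rewrite /q max_r; last by rewrite subr_le0 ltW.
    rewrite !mulr0 sub0r.
    apply: le_trans cb _; exact: hbeta_incr.
rewrite IX; have a0 := halpha _ PZP.
move: Lbound a0; case: (alpha P) => [r| |] //=.
- rewrite !lee_fin => hr r0.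
  have [hQ|hQ] := leP Q n%:R^-1; first lra.
  have h1 : 1 <= n%:R * Q.
    have := ler_wpM2l (ltW n0') (ltW hQ); rewrite mulfV ?gt_eqF //.
  have h2 := ler_peMr c0 h1.
  have hL : L * Q = Q + c * (n%:R * Q) by rewrite /L; ring.
  lra.
Qed.
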